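(* Let $(Q,\rightarrow)$ be a finite transition system, $\mathscr{R}$ a preorder on $Q$ and $\mathscr{P}\subseteq\mathscr{R}$ an equivalence relation with a representative $E.\mathrm{rep}\in E$ fixed for each block $E$ of $\mathscr{P}$. Assume there is no $(\mathscr{P},\mathscr{R})$-splitter transition of type 1, and let $E\rightarrow B$ be a $(\mathscr{P},\mathscr{R})$-splitter transition of type 2. Let $P'=\mathrm{Split}(P_{\mathscr{P}},E\cap\rightarrow^{-1}(B))$. Then $\mathscr{P}_{P'}$ is strictly included in $\mathscr{P}$ and contains every $\mathscr{R}$-block-stable equivalence relation included in $\mathscr{P}$.
   Context: A preorder is a reflexive transitive relation; its blocks are $[q]_{\mathscr{R}}=\{q'\mid q\,\mathscr{R}\,q'\wedge q'\,\mathscr{R}\,q\}$. $\mathscr{R}(X)=\{q'\mid\exists q\in X.\ q\,\mathscr{R}\,q'\}$, $\rightarrow^{-1}(Y)=\{q\mid\exists y\in Y.\ q\rightarrow y\}$; for sets, $X\rightarrow Y$ means some $x\in X,y\in Y$ have $x\rightarrow y$, and $X\,\mathscr{R}\,Y$ means $(X\times Y)\cap\mathscr{R}\neq\emptyset$. $P_{\mathscr{P}}$ is the partition into blocks of $\mathscr{P}$; $\mathscr{P}_P=\bigcup_{E\in P}E\times E$. For a block $E$ of $\mathscr{P}$ and a block $B$ of $\mathscr{R}$, $\mathrm{RelCount}_{(\mathscr{P},\mathscr{R})}(E,B)=|\{E'\in P_{\mathscr{P}}\mid E.\mathrm{rep}\rightarrow E'\wedge B\,\mathscr{R}\,E'\}|$.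 A $(\mathscr{P},\mathscr{R})$-splitter transition of type 1 is a pair ($E$ block of $\mathscr{P}$, $B$ block of $\mathscr{R}$) with $E\rightarrow B$ and $\mathrm{RelCount}_{(\mathscr{P},\mathscr{R})}(E,B)=0$. A $(\mathscr{P},\mathscr{R})$-splitter transition of type 2 is a pair ($E$, $B$) with $E.\mathrm{rep}\rightarrow B$, $\mathrm{RelCount}_{(\mathscr{P},\mathscr{R})}(E,B)=|\{[b]_{\mathscr{P}}\subseteq B\mid E.\mathrm{rep}\rightarrow b\}|$, and $E\not\subseteq\rightarrow^{-1}(B)$. $\mathrm{Split}(P,M)$ replaces each block $E$ of $P$ with $E\cap M\neq\emptyset$ and $E\not\subseteq M$ by $E\cap M$ and $E\setminus M$. An equivalence relation $\mathscr{P}''\subseteq\mathscr{R}$ is $\mathscr{R}$-block-stable if for all $b,d,d'$ with $d\,\mathscr{P}''\,d'$: $d\in\rightarrow^{-1}(\mathscr{R}(b))\iff d'\in\rightarrow^{-1}(\mathscr{R}(b))$. *)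

(* Defs.v *)
From mathcomp Require Import all_boot.
Set Implicit Arguments. Unset Strict Implicit. Unset Printing Implicit Defensive.

Section Defs.
Variable Q : finType.

Definition is_preorder (R : rel Q) := reflexive R /\ transitive R.
Definition is_equiv (P : rel Q) := reflexive P /\ symmetric P /\ transitive P.
Definition subrel_of (P R : rel Q) := forall x y, P x y -> R x y.

Definition block (R : rel Q) (q : Q) : {set Q} := [set q' | R q q' && R q' q].
Definition is_block (R : rel Q) (X : {set Q}) := exists q, X = block R q.

Definition Rimg (R : rel Q) (X : {set Q}) : {set Q} :=
  [set q' | [exists q in X, R q q']].
Definition pre (tr : rel Q) (Y : {set Q}) : {set Q} :=
  [set q | [exists y in Y, tr q y]].
Definition set_tr (tr : rel Q) (X Y : {set Q}) :=
  [exists x in X, exists y in Y, tr x y].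
Definition set_rel (R : rel Q) (X Y : {set Q}) :=
  [exists x in X, exists y in Y, R x y].

Definition part (P : rel Q) : {set {set Q}} := [set block P q | q : Q].
Definition rel_of_part (Pt : {set {set Q}}) : rel Q :=
  fun x y => [exists E in Pt, (x \in E) && (y \in E)].

Definition RelCount (tr R P : rel Q) (rep : {set Q} -> Q) (E B : {set Q}) : nat :=
  #|[set E' in part P | set_tr tr [set rep E] E' && set_rel R B E']|.

Definition splitter1 (tr R P : rel Q) (rep : {set Q} -> Q) (E B : {set Q}) :=
  [/\ E \in part P, is_block R B, set_tr tr E B & RelCount tr R P rep E B = 0].

Definition splitter2 (tr R P : rel Q) (rep : {set Q} -> Q) (E B : {set Q}) :=
  [/\ E \in part P, is_block R B, set_tr tr [set rep E] B,
      RelCount tr R P rep E B =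
        #|[set block P b | b in [set b | tr (rep E) b & block P b \subset B]]|
    & ~~ (E \subset pre tr B)].

Definition is_split (M E : {set Q}) := (E :&: M != set0) && ~~ (E \subset M).
Definition split_part (Pt : {set {set Q}}) (M : {set Q}) : {set {set Q}} :=
  [set E in Pt | ~~ is_split M E]
  :|: [set E :&: M | E in Pt & is_split M E]
  :|: [set E :\: M | E in Pt & is_split M E].

Definition block_stable (R P'' : rel Q) (tr : rel Q) :=
  [/\ is_equiv P'', subrel_of P'' R &
    forall b d d', P'' d d' ->
      (d \in pre tr (Rimg R [set b])) = (d' \in pre tr (Rimg R [set b]))].

Definition strict_subrel (P1 P2 : rel Q) :=
  subrel_of P1 P2 /\ exists x y, P2 x y /\ ~~ P1 x y.

End Defs.

(* Main.v *)
Require Import Defs.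
From mathcomp Require Import all_boot.
Set Implicit Arguments. Unset Strict Implicit.

Section Helpers.
Variable Q : finType.
Implicit Types (P R tr : rel Q).

Lemma blk_mem P (HP : is_equiv P) x y : (y \in block P x) = P x y.
Proof.
case: HP => Hr [Hs Ht]; rewrite inE.
by apply/andP/idP => [[]//|h]; split=> //; rewrite Hs.
Qed.

Lemma blk_eq P (HP : is_equiv P) x y : P x y -> block P x = block P y.
Proof.
move=> hxy; case: (HP) => Hr [Hs Ht].
apply/setP=> z; rewrite !blk_mem //; apply/idP/idP => h.
  by apply: Ht h; rewrite Hs.
by apply: Ht h.
Qed.

Lemma part_blk P (HP : is_equiv P) F x : F \in part P -> x \in F -> F = block P x.
Proof.
case/imsetP=> q _ -> hx; apply: blk_eq => //; by rewrite -blk_mem.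
Qed.

Lemma blk_part P q : block P q \in part P.
Proof. by apply/imsetP; exists q. Qed.

Lemma blk_rel P (HP : is_equiv P) q x y :
  x \in block P q -> y \in block P q -> P x y.
Proof.
case: (HP) => Hr [Hs Ht]; rewrite !blk_mem // => hx hy.
by apply: Ht hy; rewrite Hs.
Qed.
End Helpers.

Theorem lemma6 (Q : finType) (tr R P : rel Q) (rep : {set Q} -> Q)
  (HR : is_preorder R) (HP : is_equiv P) (HPR : subrel_of P R)
  (Hrep : forall E, E \in part P -> rep E \in E)
  (Hno1 : forall E B, ~ splitter1 tr R P rep E B)
  (E B : {set Q}) (H2 : splitter2 tr R P rep E B) :
  let P' := split_part (part P) (E :&: pre tr B) in
  strict_subrel (rel_of_part P') P /\
  (forall P'' : rel Q, is_equiv P'' -> subrel_of P'' P ->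
     block_stable R P'' tr -> subrel_of P'' (rel_of_part P')).
Proof.
move=> P'.
case: H2 => HE [q0 HB] Htr Hcnt Hnsub.
case: (HR) => Rr Rt. case: (HP) => Pr [Ps Pt].
set M := E :&: pre tr B.
have repE := Hrep E HE.
have repB : rep E \in pre tr B.
  case/existsP: Htr => x /andP [/set1P -> /existsP [y /andP [hy ht]]].
  by rewrite inE; apply/existsP; exists y; rewrite hy.
have repM : rep E \in M by rewrite inE repE.
have Esplit : is_split M E.
  rewrite /is_split; apply/andP; split.
    by apply/set0Pn; exists (rep E); rewrite inE repE.
  apply/negP => hs; case/subsetPn: Hnsub => y hy hny.
  by move/subsetP: hs => /(_ y hy); rewrite inE => /andP [_ ]; rewrite (negbTE hny).
have others : forall F, F \in part P -> is_split M F -> F = E.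
  move=> F hF /andP [/set0Pn [x] ] ; rewrite !inE => /andP [hxF /andP [hxE _]] _.
  by rewrite (part_blk HP hF hxF) (part_blk HP HE hxE).
have Psub : forall F, F \in P' -> exists2 G, G \in part P & F \subset G.
  move=> F; rewrite /P' /split_part !inE => /orP [/orP [|] |].
  - by case/andP=> hF _; exists F.
  - by case/imsetP=> G; rewrite inE => /andP [hG _] ->; exists G => //; apply: subsetIl.
  - by case/imsetP=> G; rewrite inE => /andP [hG _] ->; exists G => //; apply: subsetDl.
have inP'1 : E :&: M \in P'.
  by rewrite /P' /split_part !inE; apply/orP; left; apply/orP; right;
     apply/imsetP; exists E => //; rewrite inE HE Esplit.
have inP'2 : E :\: M \in P'.
  by rewrite /P' /split_part !inE; apply/orP; right;
     apply/imsetP; exists E => //; rewrite inE HE Esplit.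
split.
  split.
    move=> x y /existsP [F /andP [hF /andP [hx hy]]].
    case: (Psub F hF) => G hG /subsetP hFG.
    case/imsetP: hG => q _ hq; subst G.
    exact: (blk_rel HP (hFG x hx) (hFG y hy)).
  case/subsetPn: Hnsub => y hy hny.
  exists (rep E), y; split.
    by rewrite -(blk_mem HP) -(part_blk HP HE repE).
  apply/negP => /existsP [F /andP [hF /andP [hx hyF]]].
  move: hF; rewrite /P' /split_part !inE => /orP [/orP [|] |].
  - case/andP=> hF hns.
    have : F = E by rewrite (part_blk HP hF hx); apply/esym/part_blk.
    by move=> eF; move: hns; rewrite eF Esplit.
  - case/imsetP=> G _ eF; move: hyF; rewrite eF !inE => /and3P [_ _ h].
    by move: hny; rewrite inE h.
  - case/imsetP=> G _ eF; move: hx; rewrite eF !inE => /andP [].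
    by move: repB; rewrite inE repE => ->.
move=> P'' HP'' HP''P [_ _ Hst] d d' hdd'.
have key : forall x x', P'' x x' -> x \in E -> x' \in E ->
    x \in pre tr B -> x' \in pre tr B.
  move=> x x' hxx' hxE hx'E hxB; move: hxB; rewrite inE => /existsP [z /andP [hzB hxz]].
  have hx : x \in pre tr (Rimg R [set q0]).
    rewrite inE; apply/existsP; exists z; rewrite hxz andbT inE.
    apply/existsP; exists q0; rewrite inE eqxx /=.
    by move: hzB; rewrite HB inE => /andP [].
  move: hx; rewrite (Hst q0 _ _ hxx') inE => /existsP [y /andP [hy hx'y]].
  move: hy; rewrite inE => /existsP [q /andP [/set1P -> hq0y]].
  have hsp1 : set_tr tr E (block R y).
    apply/existsP; exists x'; rewrite hx'E; apply/existsP; exists y.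
    by rewrite inE Rr hx'y.
  have : RelCount tr R P rep E (block R y) != 0.
    apply/negP => /eqP h0; apply: (Hno1 E (block R y)); split => //.
    by exists y.
  rewrite /RelCount cards_eq0 => /set0Pn [E' ].
  rewrite inE => /andP [hE' /andP [/existsP [r /andP [/set1P -> /existsP [z1 /andP [hz1 trz1]]]]
     /existsP [w /andP [hw /existsP [z2 /andP [hz2 hwz2]]]]]].
  have Ryz1 : R y z1.
    have hz21 : R z2 z1.
      apply: (HPR); case/imsetP: hE' => qq _ eq; subst E'.
      exact: (blk_rel HP hz2 hz1).
    move: hw; rewrite inE => /andP [hyw _].
    by apply: (Rt) hz21; apply: (Rt) hwz2.
  have S12 : [set block P b | b in [set b | tr (rep E) b & block P b \subset B]]
      \subset [set E' in part P | set_tr tr [set rep E] E' && set_rel R B E'].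
    apply/subsetP => G /imsetP [b]; rewrite inE => /andP [trb hbB] ->.
    have hb : b \in block P b by rewrite blk_mem.
    rewrite inE blk_part /=; apply/andP; split.
      apply/existsP; exists (rep E); rewrite set11; apply/existsP; exists b.
      by rewrite hb.
    apply/existsP; exists b; rewrite (subsetP hbB _ hb); apply/existsP; exists b.
    by rewrite hb Rr.
  have S21 : [set E' in part P | set_tr tr [set rep E] E' && set_rel R B E']
     \subset [set block P b | b in [set b | tr (rep E) b & block P b \subset B]].
    suff -> : [set E' in part P | set_tr tr [set rep E] E' && set_rel R B E'] =
      [set block P b | b in [set b | tr (rep E) b & block P b \subset B]] by [].
    apply/eqP; rewrite eq_sym eqEcard S12 /=.
    by move: Hcnt; rewrite /RelCount => ->.
  have hE'1 : E' \in [set E' in part P | set_tr tr [set rep E] E' && set_rel R B E'].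
    rewrite inE hE' /=; apply/andP; split.
      apply/existsP; exists (rep E); rewrite set11; apply/existsP; exists z1.
      by rewrite hz1.
    apply/existsP; exists q0; rewrite HB inE !Rr /=; apply/existsP; exists z1.
    by rewrite hz1 (Rt _ _ _ hq0y Ryz1).
  case/imsetP: (subsetP S21 _ hE'1) => b; rewrite inE => /andP [_ hbB] eE'.
  have hz1B : z1 \in B by apply: (subsetP hbB); rewrite -eE'.
  rewrite inE; apply/existsP; exists y; rewrite hx'y andbT HB inE hq0y /=.
  by apply: (Rt z1 _ _ Ryz1); move: hz1B; rewrite HB inE => /andP [].
have hP := HP''P _ _ hdd'.
have hd : d \in block P d by rewrite blk_mem.
have hd' : d' \in block P d by rewrite blk_mem.
case: (boolP (is_split M (block P d))) => hs.
  have eE := others _ (blk_part P d) hs.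
  rewrite eE in hd hd'.
  case: HP'' => _ [P''s _].
  case: (boolP (d \in pre tr B)) => hdB.
    have hd'B := key _ _ hdd' hd hd' hdB.
    by apply/existsP; exists (E :&: M); rewrite inP'1 /= in_setI hd /M !in_setI hd hd' hdB hd'B.
  have hd'B : d' \notin pre tr B.
    by apply/negP => h; move: hdB; rewrite (key d' d _ hd' hd h) // P''s.
  apply/existsP; exists (E :\: M); rewrite inP'2 /= /M !in_setD !in_setI hd hd' /=.
  by rewrite (negbTE hdB) (negbTE hd'B).
apply/existsP; exists (block P d); rewrite hd hd' andbT.
by rewrite /P' /split_part !inE blk_part hs.
Qed.
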